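(* Let $S$ be a semigroup whose loop problem (with respect to some finite semigroup choice of generators) is context-free, and let $\sigma : X^+ \to S$ be any finite semigroup choice of generators for $S$. Then the multiplication table $\{u \# v \# w^R : u, v, w \in X^+, (uv)\sigma = w\sigma\}$ of $S$ with respect to $\sigma$ and $X^+$ is a context-free language. In particular, $S$ is word hyperbolic in the sense of Duncan and Gilman.
   Context: Maps are written on the right. $X^+$, $X^*$: free semigroup and free monoid on $X$. For a monoid $M$ and surjective monoid morphism $\sigma : X^* \to M$, let $\overline{X} = \{\overline{x} : x \in X\}$ be new symbols, $\hat{X} = X \cup \overline{X}$; the loop automaton has vertex set $M$, for each $a \in M$, $x \in X$ an edge $a \to a(x\sigma)$ labelled $x$ and an edge $a(x\sigma) \to a$ labelled $\overline{x}$; the loop problem is the set of labels of paths from the identity to the identity. For a semigroup $S$ and surjective morphism $\sigma : X^+ \to S$, the loop problem of $S$ is the loop problem of $S^1$ ($S$ with a new identity adjoined even if one exists) with respect to the extension $X^* \to S^1$. Here $\#$ is a new symbol not in $X$ and $w^R$ is the reversal of $w$. A choice of representatives for $S$ is a finite semigroup choice of generators $\sigma : X^+ \to S$ with a subset $R \subseteq X^+$ such that $R\sigma = S$; it is regular if $R$ is regular; the multiplication table w.r.t. $\sigma$ and $R$ is $\{u\#v\#w^R : u,v,w \in R, (uv)\sigma = w\sigma\}$. $S$ is word hyperbolic in the sense of Duncan and Gilman if it admits a regular choice of representatives whose multiplication table is context-free. *)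

(* Defs.v *)
From mathcomp Require Import all_boot.
Set Implicit Arguments. Unset Strict Implicit. Unset Printing Implicit Defensive.

Definition language (T : Type) := seq T -> Prop.

Section CFG.
Variables (T N : finType).

Definition sform := seq (N + T)%type.

Inductive cfg_step (rules : seq (N * sform)) : sform -> sform -> Prop :=
| CfgStep (a b : sform) (A : N) (r : sform) :
    (A, r) \in rules -> cfg_step rules (a ++ inl A :: b) (a ++ r ++ b).

Inductive cfg_derives (rules : seq (N * sform)) : sform -> sform -> Prop :=
| CfgRefl u : cfg_derives rules u u
| CfgTrans u v w : cfg_step rules u v -> cfg_derives rules v w ->
                   cfg_derives rules u w.

Definition cfg_language (rules : seq (N * sform)) (start : N) : language T :=
  fun w => cfg_derives rules [:: inl start] (map inr w).
End CFG.

Definition context_free (T : finType) (L : language T) : Prop :=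
  exists (N : finType) (rules : seq (N * sform T N)) (start : N),
    forall w, L w <-> cfg_language rules start w.

Definition regular (T : finType) (L : language T) : Prop :=
  exists (Q : finType) (q0 : Q) (delta : Q -> T -> Q) (acc : pred Q),
    forall w, L w <-> acc (foldl delta q0 w).

(* S^1 : S with a new identity adjoined (None), even if S has one. *)
Definition mul1 (S : Type) (mul : S -> S -> S) (a b : option S) : option S :=
  match a, b with
  | None, _ => b
  | _, None => a
  | Some x, Some y => Some (mul x y)
  end.

(* On a nonempty word u, eval1 u = Some (u sigma) where sigma : X^+ -> S is the
   semigroup morphism determined by f; eval1 [::] = None (the identity of S^1). *)
Definition eval1 (S : Type) (mul : S -> S -> S) (X : Type) (f : X -> S)
    (w : seq X) : option S :=
  foldl (mul1 mul) None (map (fun x => Some (f x)) w).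

(* f : X -> S induces a surjective morphism sigma : X^+ -> S
   (a finite semigroup choice of generators when X is a finType). *)
Definition generates (S : Type) (mul : S -> S -> S) (X : Type) (f : X -> S) :
    Prop :=
  forall s : S, exists w : seq X, eval1 mul f w = Some s.

(** * Loop problem.  hat X = X + X, inl x = x, inr x = xbar.
    Loop automaton on vertex set S^1: edges a --x--> a(x sigma) and
    a(x sigma) --xbar--> a. *)
Definition loop_edge (S : Type) (mul : S -> S -> S) (X : Type) (f : X -> S)
    (a : option S) (l : X + X) (b : option S) : Prop :=
  match l with
  | inl x => b = mul1 mul a (Some (f x))
  | inr x => a = mul1 mul b (Some (f x))
  end.

Fixpoint loop_walk (S : Type) (mul : S -> S -> S) (X : Type) (f : X -> S)
    (a : option S) (w : seq (X + X)) (b : option S) : Prop :=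
  match w with
  | [::] => a = b
  | l :: w' => exists c, loop_edge mul f a l c /\ loop_walk mul f c w' b
  end.

Definition loop_problem (S : Type) (mul : S -> S -> S) (X : finType)
    (f : X -> S) : language (X + X)%type :=
  fun w => loop_walk mul f None w None.

(** * Multiplication table.  Alphabet option X, with None playing the role of #.
    { u # v # w^R : u, v, w in R, (uv) sigma = w sigma } with R a set of
    nonempty words. *)
Definition mult_table (S : Type) (mul : S -> S -> S) (X : finType)
    (f : X -> S) (R : seq X -> Prop) : language (option X) :=
  fun t => exists u v w : seq X,
    [/\ R u /\ R v /\ R w, (0 < size u) && (0 < size v) && (0 < size w),
        eval1 mul f (u ++ v) = eval1 mul f w &
        t = map Some u ++ None :: map Some v ++ None :: map Some (rev w)].

Definition nonempty_words (X : Type) : seq X -> Prop := fun u => 0 < size u.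

Definition DG_hyperbolic (S : Type) (mul : S -> S -> S) : Prop :=
  exists (X : finType) (f : X -> S) (R : seq X -> Prop),
    [/\ generates mul f,
        (forall u, R u -> 0 < size u),
        (forall s, exists u, R u /\ eval1 mul f u = Some s),
        regular R &
        context_free (mult_table mul f R)].

(* Main.v *)
Require Import Defs.
From mathcomp Require Import all_boot.
From Stdlib Require Import Setoid ClassicalEpsilon.
Set Implicit Arguments. Unset Strict Implicit. Unset Printing Implicit Defensive.

Section Gen.
Variables (T N : finType) (rules : seq (N * sform T N)).

Inductive genS : sform T N -> seq T -> Prop :=
| GNil : genS [::] [::]
| GT a s w : genS s w -> genS (inr a :: s) (a :: w)
| GN A r s w1 w2 : (A, r) \in rules -> genS r w1 -> genS s w2 ->
    genS (inl A :: s) (w1 ++ w2).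

Lemma genS_cat s1 s2 w : genS (s1 ++ s2) w <->
  exists w1 w2, [/\ w = w1 ++ w2, genS s1 w1 & genS s2 w2].
Proof.
split.
- elim: s1 w => [|x s1 IH] w /= H; first by exists [::], w; split => //; constructor.
  inversion H; subst.
  + have [w1 [w2 [-> K1 K2]]] := IH _ H3.
    by exists (a :: w1), w2; split => //; constructor.
  + have [w3 [w4 [-> K1 K2]]] := IH _ H5.
    exists (w1 ++ w3), w4; split; first by rewrite catA.
    * by econstructor; eauto.
    * by [].
- case=> w1 [w2 [-> H1 H2]]; elim: H1 w2 H2 => [|a s' w' _ IH|A r s' w3 w4 Hr Hr3 _ _ IH] w2 H2 /=; first by [].

  + by constructor; auto.
  + by rewrite -catA; exact: GN Hr Hr3 (IH _ H2).
Qed.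

Lemma genS_terms x w : genS (map inr x) w -> w = x.
Proof.
elim: x w => [|a x IH] w H; inversion H; subst => //.
by rewrite (IH _ H3).
Qed.

Lemma genS_terms' x : genS (map inr x) x.
Proof. by elim: x => [|a x IH]; constructor. Qed.

Lemma derives_trans u v w : cfg_derives rules u v -> cfg_derives rules v w ->
  cfg_derives rules u w.
Proof. by elim=> // u1 v1 w1 Hs _ IH H; econstructor; eauto. Qed.

Lemma derives_ctx a b u v : cfg_derives rules u v ->
  cfg_derives rules (a ++ u ++ b) (a ++ v ++ b).
Proof.
elim=> [u1|u1 v1 w1 Hs _ IH]; first by constructor.
apply: CfgTrans IH; case: Hs => a1 b1 A r Hr.
have -> : a ++ (a1 ++ inl A :: b1) ++ b = (a ++ a1) ++ inl A :: (b1 ++ b)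
  by rewrite -!catA.
have -> : a ++ (a1 ++ r ++ b1) ++ b = (a ++ a1) ++ r ++ (b1 ++ b)
  by rewrite -!catA.
by constructor.
Qed.

Lemma genS_derives s w : genS s w -> cfg_derives rules s (map inr w).
Proof.
elim=> [|a s1 w1 _ IH|A r s1 w1 w2 Hr _ IH1 _ IH2].
- by constructor.
- by have := derives_ctx [:: inr a] [::] IH; rewrite !cats0.
- apply: (@CfgTrans _ _ rules _ (r ++ s1)).
    by have := @CfgStep _ _ rules [::] s1 A r Hr.
  apply: derives_trans (_ : cfg_derives rules (map inr w1 ++ s1) _).
    by have := derives_ctx [::] s1 IH1.
  rewrite map_cat; have := derives_ctx (map inr w1) [::] IH2; by rewrite !cats0.
Qed.

Lemma derives_genS u v : cfg_derives rules u v -> forall w, v = map inr w -> genS u w.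
Proof.
elim=> [u1|u1 v1 w1 Hs _ IH] w E; first by subst; apply: genS_terms'.
have {IH} H := IH _ E.
case: Hs H => a b A r Hr /genS_cat [wa [wrb [-> Ha /genS_cat [wr [wb [-> Hr' Hb]]]]]].
apply/genS_cat; exists wa, (wr ++ wb); split => //.
by econstructor; eauto.
Qed.

Lemma cfg_genS S0 w : cfg_language rules S0 w <->
  exists r, (S0, r) \in rules /\ genS r w.
Proof.
rewrite /cfg_language; split.
- move/derives_genS => /(_ w erefl) H; inversion H; subst.
  inversion H5; subst. by exists r; rewrite cats0.
- case=> r [Hr Hg]; apply: genS_derives.
  by rewrite -[w]cats0; econstructor; eauto; constructor.
Qed.
End Gen.


Section Trans.
Variables (A B Q : finType) (trans : Q -> A -> Q -> seq (seq B)).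

Fixpoint run (p : Q) (i : seq A) (w : seq B) (q : Q) : Prop :=
  match i with
  | [::] => w = [::] /\ p = q
  | a :: i' => exists q' out w', [/\ out \in trans p a q', w = out ++ w' & run q' i' w' q]
  end.

Lemma run_cat p i1 i2 w q : run p (i1 ++ i2) w q <->
  exists m w1 w2, [/\ w = w1 ++ w2, run p i1 w1 m & run m i2 w2 q].
Proof.
split.
- elim: i1 p w => [|a i1 IH] p w /=; first by move=> H; exists p, [::], w.
  case=> q' [out [w' [Ho -> /IH [m [w1 [w2 [-> H1 H2]]]]]]].
  exists m, (out ++ w1), w2; split; first by rewrite catA.
  + by exists q', out, w1.
  + by [].
- case=> m [w1 [w2 [-> H1 H2]]].
  elim: i1 p w1 H1 => [|a i1 IH] p w1 /=; first by case=> -> ->.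
  case=> q' [out [w' [Ho -> H]]].
  exists q', out, (w' ++ w2); split => //; first by rewrite catA.
  exact: IH.
Qed.

Variable N : finType.
Notation NT := (option ((Q * N * Q) + (Q * A * Q)))%type.

Fixpoint expand (p : Q) (r : sform A N) : seq (sform B NT * Q) :=
  match r with
  | [::] => [:: ([::], p)]
  | inl X :: r' => [seq (inl (Some (inl (p, X, q))) :: x.1, x.2) | q <- enum Q, x <- expand q r']
  | inr a :: r' => [seq (inl (Some (inr (p, a, q))) :: x.1, x.2) | q <- enum Q, x <- expand q r']
  end.

Lemma expand_nil p s q : ((s, q) \in expand p [::]) = (s == [::]) && (q == p).
Proof. by rewrite /= inE xpair_eqE. Qed.

Lemma expand_N p X r s q : (s, q) \in expand p (inl X :: r) ->
  exists m s', s = inl (Some (inl (p, X, m))) :: s' /\ (s', q) \in expand m r.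
Proof.
move=> /allpairsPdep [m [[s' q'] [_ H [-> ->]]]]; by exists m, s'.
Qed.

Lemma expand_N' p X r s q m : (s, q) \in expand m r ->
  (inl (Some (inl (p, X, m))) :: s, q) \in expand p (inl X :: r).
Proof.
move=> H; apply/allpairsPdep; exists m, (s, q); split => //; by rewrite mem_enum.
Qed.

Lemma expand_T p a r s q : (s, q) \in expand p (inr a :: r) ->
  exists m s', s = inl (Some (inr (p, a, m))) :: s' /\ (s', q) \in expand m r.
Proof.
move=> /allpairsPdep [m [[s' q'] [_ H [-> ->]]]]; by exists m, s'.
Qed.

Lemma expand_T' p a r s q m : (s, q) \in expand m r ->
  (inl (Some (inr (p, a, m))) :: s, q) \in expand p (inr a :: r).
Proof.
move=> H; apply/allpairsPdep; exists m, (s, q); split => //; by rewrite mem_enum.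
Qed.

Variables (rules : seq (N * sform A N)) (S0 : N) (q0 : Q) (fin : pred Q).

Definition rulesN : seq (NT * sform B NT) :=
  [seq (Some (inl (pr.1, pr.2.1.1, pr.2.2.2)), pr.2.2.1) |
     pr <- [seq (p, x) | p <- enum Q, x <- [seq (y, z) | y <- rules, z <- expand p y.2]]].

Definition rulesT : seq (NT * sform B NT) :=
  [seq (Some (inr t), map inr o) | t <- enum {: Q * A * Q}, o <- trans t.1.1 t.1.2 t.2].

Definition rulesS : seq (NT * sform B NT) :=
  [seq (None, x.1) | x <- expand q0 [:: inl S0] & fin x.2].

Definition rules' := rulesN ++ rulesT ++ rulesS.

Lemma mem_rules' X' r' : (X', r') \in rules' ->
  match X' with
  | Some (inl (p, X, q)) => exists r, (X, r) \in rules /\ (r', q) \in expand p r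
  | Some (inr (p, a, q)) => exists o, o \in trans p a q /\ r' = map inr o
  | None => exists q, fin q /\ (r', q) \in expand q0 [:: inl S0]
  end.
Proof.
rewrite !mem_cat => /or3P [].
- case/mapP=> [[p [[X r] [s q]]]] /allpairsPdep [p' [[y z] [_ H E2]]].
  move: E2 H; case=> E3 E4; subst => E4; subst.
  move=> /allpairsPdep [[X2 r2] [[s2 q2] [H1 H2 E1]]].
  move: E1; case=> E5 E6 E7 E8; subst; case=> -> -> /=; by exists r2.
- case/allpairsPdep=> [[[p a] q] [o [_ Ho [-> ->]]]]; by exists o.
- case/mapP=> [[s q]]; rewrite mem_filter => /andP [Hf Hm] [-> ->]; by exists q.
Qed.

Lemma rulesN_mem p X r s q : (X, r) \in rules -> (s, q) \in expand p r ->
  (Some (inl (p, X, q)), s) \in rules'.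
Proof.
move=> H1 H2; rewrite mem_cat; apply/orP; left.
apply/mapP; exists (p, ((X, r), (s, q))) => //.
apply/allpairsPdep; exists p, ((X, r), (s, q)); split => //; first by rewrite mem_enum.
apply/allpairsPdep; exists (X, r), (s, q); split => //.
Qed.

Lemma rulesT_mem p a q o : o \in trans p a q ->
  (Some (inr (p, a, q)), map inr o) \in rules'.
Proof.
move=> H; rewrite !mem_cat; apply/orP; right; apply/orP; left.
apply/allpairsPdep; exists (p, a, q), o; split => //; by rewrite mem_enum.
Qed.

Lemma rulesS_mem s q : fin q -> (s, q) \in expand q0 [:: inl S0] ->
  (None, s) \in rules'.
Proof.
move=> H1 H2; rewrite !mem_cat; apply/orP; right; apply/orP; right.
apply/mapP; exists (s, q) => //; by rewrite mem_filter H1.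
Qed.

Lemma sound s w : genS rules' s w -> forall p r q, (s, q) \in expand p r ->
  exists i, genS rules r i /\ run p i w q.
Proof.
elim=> [|b s1 w1 _ IH|X' r'' s1 w1 w2 Hrule Hr'' IHr Hs IHs] p r q.
- case: r => [|[X|a] r].
  + by rewrite expand_nil => /andP [_ /eqP ->]; exists [::]; split => //; constructor.
  + by case/expand_N=> m [s' [E _]].
  + by case/expand_T=> m [s' [E _]].
- case: r => [|[X|a] r].
  + by rewrite expand_nil.
  + by case/expand_N=> m [s' [E _]].
  + by case/expand_T=> m [s' [E _]].
- case: r => [|[X|a] r].
  + by rewrite expand_nil.
  + case/expand_N=> m [s' [[E1 E2] Hm]]; subst.
    have [rX [HX Hexp]] := mem_rules' Hrule.
    have [i1 [G1 R1]] := IHr _ _ _ Hexp.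
    have [i2 [G2 R2]] := IHs _ _ _ Hm.
    exists (i1 ++ i2); split; first exact: GN HX G1 G2.
    by apply/run_cat; exists m, w1, w2.
  + case/expand_T=> m [s' [[E1 E2] Hm]]; subst.
    have [o [Ho E]] := mem_rules' Hrule; subst.
    have E := genS_terms Hr''; subst.
    have [i2 [G2 R2]] := IHs _ _ _ Hm.
    exists (a :: i2); split; first by constructor.
    by exists m, o, w2.
Qed.

Lemma complete r i : genS rules r i -> forall p w q, run p i w q ->
  exists s, (s, q) \in expand p r /\ genS rules' s w.
Proof.
elim=> [|a s1 i1 _ IH|X r1 s1 i1 i2 Hr _ IH1 _ IH2] p w q.
- case=> -> ->; exists [::]; split; [by rewrite expand_nil !eqxx | constructor].
- case=> q' [out [w' [Ho -> H]]].
  have [s [Hs Gs]] := IH _ _ _ H.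
  exists (inl (Some (inr (p, a, q'))) :: s); split; first exact: expand_T'.
  apply: GN; [apply: rulesT_mem; exact: Ho | apply: genS_terms' | exact: Gs].
- case/run_cat=> m [w1 [w2 [-> H1 H2]]].
  have [s' [Hs' Gs']] := IH1 _ _ _ H1.
  have [s [Hs Gs]] := IH2 _ _ _ H2.
  exists (inl (Some (inl (p, X, m))) :: s); split; first exact: expand_N'.
  apply: GN; [apply: rulesN_mem; [exact: Hr | exact: Hs'] | exact: Gs' | exact: Gs].
Qed.
End Trans.

Lemma cf_ext (T : finType) (L1 L2 : language T) :
  context_free L1 -> (forall w, L1 w <-> L2 w) -> context_free L2.
Proof.
case=> N [rules [S0 H]] E; exists N, rules, S0 => w; split.
- by move/E/H.
- by move/H/E.
Qed.

Lemma cf_trans (A B Q : finType) (trans : Q -> A -> Q -> seq (seq B))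
  (q0 : Q) (fin : pred Q) (L : language A) : context_free L ->
  context_free (fun w => exists i q, [/\ L i, fin q & run trans q0 i w q]).
Proof.
case=> N [rules [S0 HL]].
exists (option ((Q * N * Q) + (Q * A * Q)))%type.
exists (rules' trans rules S0 q0 fin), None => w; split.
- case=> i [q [Li Fq R]]; apply/cfg_genS.
  have /cfg_genS [r [Hr Gr]] := (HL i).1 Li.
  have G : genS rules [:: inl S0] i by rewrite -[i]cats0; econstructor; eauto; constructor.
  have [s [Hs Gs]] := complete S0 q0 fin G R.
  exists s; split => //; exact: (rulesS_mem trans rules Fq Hs).
- move/cfg_genS=> [r' [Hr' Gr']].
  have [q [Fq Hexp]] := mem_rules' Hr'.
  have [i [Gi Ri]] := sound Gr' Hexp.
  exists i, q; split => //; apply/HL/cfg_genS.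
  inversion Gi; subst. inversion H4; subst. by exists r; rewrite cats0.
Qed.


Section Walk.
Variables (S : Type) (mul : S -> S -> S) (mulA : associative mul).

Lemma mul1A : associative (mul1 mul).
Proof. by case=> [a|] [b|] [c|] //=; rewrite mulA. Qed.

Lemma foldl_mul1 (s : seq (option S)) a :
  foldl (mul1 mul) a s = mul1 mul a (foldl (mul1 mul) None s).
Proof.
elim: s a => [|x s IH] a /=; first by case: a.
by rewrite IH [in RHS]IH mul1A.
Qed.

Variables (X : Type) (f : X -> S).

Lemma walk_cat a w1 w2 b : loop_walk mul f a (w1 ++ w2) b <->
  exists c, loop_walk mul f a w1 c /\ loop_walk mul f c w2 b.
Proof.
elim: w1 a => [|l w1 IH] a /=.
- by split; [move=> H; exists a | case=> c [-> H]].
- split.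
  + case=> c [E /IH [d [H1 H2]]]; exists d; split => //; by exists c.
  + case=> d [[c [E H1]] H2]; exists c; split => //; apply/IH; by exists d.
Qed.

Lemma walk_inl w a b : loop_walk mul f a (map inl w) b <->
  b = foldl (mul1 mul) a (map (fun x => Some (f x)) w).
Proof.
elim: w a => [|x w IH] a /=; first by split => ->.
split.
- by case=> c [-> /IH].
- move=> E; exists (mul1 mul a (Some (f x))); split => //; exact/IH.
Qed.

Lemma walk_inr w a b : loop_walk mul f a (map inr (rev w)) b <->
  a = foldl (mul1 mul) b (map (fun x => Some (f x)) w).
Proof.
elim/last_ind: w a => [|w x IH] a /=; first by split => ->.
rewrite rev_rcons map_rcons foldl_rcons /=.
split.
- by case=> c [-> /IH ->].
- move=> ->; eexists; split; first by reflexivity.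
  exact/IH.
Qed.
End Walk.


Section Stage1.
Variables (S : Type) (mul : S -> S -> S) (mulA : associative mul).
Variables (Y : finType) (g : Y -> S) (X : finType) (f : X -> S).
Variables (c : X -> seq Y) (Hc : forall x, eval1 mul g (c x) = Some (f x)).

Definition e (xl : X + X) : seq (Y + Y) :=
  match xl with inl x => map inl (c x) | inr x => map inr (rev (c x)) end.

Lemma e_size xl : 0 < size (e xl).
Proof.
have H x : 0 < size (c x).
  have := Hc x; by case: (c x).
by case: xl => x /=; rewrite size_map ?size_rev H.
Qed.

Lemma edge_e a xl b : loop_edge mul f a xl b <-> loop_walk mul g a (e xl) b.
Proof.
case: xl => x /=.
- rewrite walk_inl foldl_mul1 //. have := Hc x; rewrite /eval1 => ->. by [].
- rewrite walk_inr foldl_mul1 //. have := Hc x; rewrite /eval1 => ->. by [].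
Qed.

Lemma walk_flat z a b : loop_walk mul f a z b <-> loop_walk mul g a (flatten (map e z)) b.
Proof.
elim: z a => [|xl z IH] a /=; first by [].
rewrite walk_cat; split.
- case=> d [/edge_e H1 /IH H2]; by exists d.
- case=> d [/edge_e H1 /IH H2]; by exists d.
Qed.

Definition K := \max_(xl : X + X) size (e xl).
Lemma e_le xl : size (e xl) <= K.
Proof. rewrite /K; exact: (@leq_bigmax _ (fun xl => size (e xl)) xl). Qed.

Definition Q1 := option ((X + X) * 'I_K).

Definition trans1 (p : Q1) (a : Y + Y) (q : Q1) : seq (seq (X + X)) :=
  match p, q with
  | None, None => [seq [:: xl] | xl <- enum {: X + X} & e xl == [:: a]]
  | None, Some (xl, k) =>
      if [&& nat_of_ord k == 1, 1 < size (e xl) & nth a (e xl) 0 == a] then [:: [::]] else [::]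
  | Some (xl, k), None =>
      if (k.+1 == size (e xl)) && (nth a (e xl) k == a) then [:: [:: xl]] else [::]
  | Some (xl, k), Some (xl', k') =>
      if [&& xl' == xl, nat_of_ord k' == k.+1, k.+1 < size (e xl) & nth a (e xl) k == a]
      then [:: [::]] else [::]
  end.

Definition valid (q : Q1) := if q is Some (xl, k) then (0 < k) && (k < size (e xl)) else true.
Definition pend (q : Q1) : seq (X + X) := if q is Some (xl, k) then [:: xl] else [::].
Definition remw (q : Q1) : seq (Y + Y) := if q is Some (xl, k) then drop k (e xl) else [::].

Lemma sound1 i q z : run trans1 q i z None -> valid q ->
  exists z', z = pend q ++ z' /\ i = remw q ++ flatten (map e z').
Proof.
elim: i q z => [|a i IH] q z /=.
  by case=> -> ->; exists [::].
case=> q' [out [w' [Ho -> H]]] Hv.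
case: q Ho Hv => [[xl k]|]; case: q' H => [[xl' k']|] H /=.
- case: ifP => // /and4P [/eqP E1 /eqP E2 H3 /eqP E4]; rewrite inE => /eqP -> Hv; subst.
  have [|z'' [-> Ei]] := IH _ _ H; first by rewrite /= E2 H3.
  exists z''; split => //; rewrite Ei /= E2 [in RHS](drop_nth a); last by case/andP: Hv.
  by rewrite E4.
- case: ifP => // /andP [/eqP E1 /eqP E4]; rewrite inE => /eqP -> Hv; subst.
  have [|z'' [-> Ei]] := IH _ _ H; first by [].
  exists z''; split => //; rewrite Ei /= (drop_nth a) ?E1 // E4.
  congr (_ :: _); rewrite drop_oversize //.
- case: ifP => // /and3P [/eqP E1 H3 /eqP E4]; rewrite inE => /eqP -> _; subst.
  have [|z'' [-> Ei]] := IH _ _ H; first by rewrite /= E1 H3.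
  exists (xl' :: z''); split => //; rewrite Ei /= E1.
  move: E4 H3; case: (e xl') => [|b s] //= -> _; by rewrite drop0.
- move=> Ho _.
  have [xl [/eqP Ee ->]] : exists xl, e xl == [:: a] /\ out = [:: xl].
    by case/mapP: Ho => xl; rewrite mem_filter => /andP [H1 H2] ->; exists xl.
  have [|z'' [-> Ei]] := IH _ _ H; first by [].
  by exists (xl :: z''); split => //; rewrite Ei /= Ee.
Qed.

Lemma aux1 xl (a0 : Y + Y) i z (Hi : run trans1 None i z None) : forall n k (Hk : k < K),
  n = size (e xl) - k.+1 -> k < size (e xl) ->
  run trans1 (Some (xl, Ordinal Hk)) (drop k (e xl) ++ i) (xl :: z) None.
Proof.
elim=> [|n IH] k Hk En Hks; rewrite (drop_nth a0) //=.
- have Ek : k.+1 = size (e xl) by apply/eqP; rewrite eqn_leq Hks -subn_eq0 -En.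
  exists None, [:: xl], z; split => //.
  rewrite ifT ?inE //; apply/andP; split; first exact/eqP.
  by rewrite -(set_nth_default (nth a0 (e xl) k) a0).
  by rewrite drop_oversize -?Ek.
- have Hk1 : k.+1 < size (e xl) by rewrite -subn_gt0 -En.
  have HK1 : k.+1 < K by apply: leq_trans Hk1 (e_le xl).
  exists (Some (xl, Ordinal HK1)), [::], (xl :: z); split => //.
  + rewrite /= ifT ?inE //; apply/and4P; split => //; try exact/eqP.
    by rewrite -(set_nth_default (nth a0 (e xl) k) a0).
  + apply: IH => //; by rewrite subnS -En.
Qed.

Lemma block1 xl i z : run trans1 None i z None ->
  run trans1 None (e xl ++ i) (xl :: z) None.
Proof.
move=> Hi; have Hs := e_size xl.
case Ee: (e xl) Hs => [|b s] // _.
case: s Ee => [|b' s] Ee.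
- exists None, [:: xl], z; split => //.
  apply/mapP; exists xl => //; by rewrite mem_filter Ee eqxx mem_enum.
- have Hs : 1 < size (e xl) by rewrite Ee.
  have HK : 1 < K by apply: leq_trans Hs (e_le xl).
  exists (Some (xl, Ordinal HK)), [::], (xl :: z); split => //.
  + rewrite /= ifT ?inE // Hs /= Ee /=; exact/eqP.
  + have := @aux1 xl b i z Hi _ 1 HK erefl Hs; by rewrite Ee.
Qed.

Lemma complete1 z : run trans1 None (flatten (map e z)) z None.
Proof.
elim: z => [|xl z IH] //=; exact: block1.
Qed.

Lemma stage1 : context_free (loop_problem mul g) -> context_free (loop_problem mul f).
Proof.
move=> HY; apply: cf_ext (cf_trans trans1 None (pred1 None) HY) _ => z; split.
- case=> i [q [Li /eqP Eq R]]; subst q.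
  have [z' [Ez Ei]] := sound1 R isT; rewrite /= in Ez Ei; subst.
  exact/walk_flat.
- move=> Lz; exists (flatten (map e z)), None; split => //.
  + exact/walk_flat.
  + exact: complete1.
Qed.
End Stage1.


Section Stage2.
Variable (X : finType).

Definition trans2 (p : 'I_4) (a : X + X) (q : 'I_4) : seq (seq (option X)) :=
  match nat_of_ord p, a, nat_of_ord q with
  | 0, inl x, 1 => [:: [:: Some x]]
  | 1, inl x, 1 => [:: [:: Some x]]
  | 1, inl x, 2 => [:: [:: None; Some x]]
  | 2, inl x, 2 => [:: [:: Some x]]
  | 2, inr x, 3 => [:: [:: None; Some x]]
  | 3, inr x, 3 => [:: [:: Some x]]
  | _, _, _ => [::]
  end.

Variable qf : 'I_4.
Hypothesis Hqf : nat_of_ord qf = 3.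

Lemma L3 i z p : nat_of_ord p = 3 -> run trans2 p i z qf ->
  exists t, i = map inr t /\ z = map Some t.
Proof.
elim: i z p => [|a i IH] z p Hp /=; first by case=> ->; exists [::].
case=> [[[|[|[|[|m]]]] Hm]] [out [w' [Ho -> H]]];
  rewrite /trans2 Hp /= in Ho; case: a Ho => x //; rewrite inE => /eqP ->.
have [t [-> ->]] := IH _ (Ordinal Hm) erefl H; by exists (x :: t).
Qed.

Lemma L3' t p : nat_of_ord p = 3 -> run trans2 p (map inr t) (map Some t) qf.
Proof.
elim: t p => [|x t IH] p Hp /=; first by split => //; apply: val_inj; rewrite /= Hp Hqf.
exists qf, [:: Some x], (map Some t); split => //; last exact: IH.
by rewrite /trans2 Hp Hqf inE.
Qed.

Lemma L2 i z p : nat_of_ord p = 2 -> run trans2 p i z qf ->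
  exists v t, [/\ 0 < size t, i = map inl v ++ map inr t & z = map Some v ++ None :: map Some t].
Proof.
elim: i z p => [|a i IH] z p Hp /=.
  by case=> _ E; move: Hp; rewrite E Hqf.
case=> [[[|[|[|[|m]]]] Hm]] [out [w' [Ho -> H]]];
  rewrite /trans2 Hp /= in Ho; case: a Ho => x //; rewrite inE => /eqP ->.
- have [v [t [Ht -> ->]]] := IH _ (Ordinal Hm) erefl H; by exists (x :: v), t.
- have [t [-> ->]] := L3 (erefl : nat_of_ord (Ordinal Hm) = 3) H; by exists [::], (x :: t).
Qed.

Lemma L2' v t p : nat_of_ord p = 2 -> 0 < size t ->
  run trans2 p (map inl v ++ map inr t) (map Some v ++ None :: map Some t) qf.
Proof.
elim: v p => [|x v IH] p Hp Ht /=.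
- case: t Ht => [|x t] // _ /=.
  exists qf, [:: None; Some x], (map Some t); split => //; last exact: L3'.
  by rewrite /trans2 Hp Hqf inE.
- exists p, [:: Some x], (map Some v ++ None :: map Some t); split => //; last exact: IH.
  by rewrite /trans2 Hp inE.
Qed.

Lemma L1 i z p : nat_of_ord p = 1 -> run trans2 p i z qf ->
  exists u v t, [/\ 0 < size v, 0 < size t, i = map inl (u ++ v) ++ map inr t &
    z = map Some u ++ None :: map Some v ++ None :: map Some t].
Proof.
elim: i z p => [|a i IH] z p Hp /=.
  by case=> _ E; move: Hp; rewrite E Hqf.
case=> [[[|[|[|[|m]]]] Hm]] [out [w' [Ho -> H]]];
  rewrite /trans2 Hp /= in Ho; case: a Ho => x //; rewrite inE => /eqP ->.
- have [u [v [t [Hv Ht -> ->]]]] := IH _ (Ordinal Hm) erefl H; by exists (x :: u), v, t.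
- have [v [t [Ht -> ->]]] := L2 (erefl : nat_of_ord (Ordinal Hm) = 2) H; exists [::], (x :: v), t; split => //.
Qed.

Definition s2 : 'I_4 := @Ordinal 4 2 isT.

Lemma L1' u v t p : nat_of_ord p = 1 -> 0 < size v -> 0 < size t ->
  run trans2 p (map inl (u ++ v) ++ map inr t)
    (map Some u ++ None :: map Some v ++ None :: map Some t) qf.
Proof.
elim: u p => [|x u IH] p Hp Hv Ht /=.
- case: v Hv => [|x v] // _ /=.
  exists s2, [:: None; Some x], (map Some v ++ None :: map Some t); split => //.
  + by rewrite /trans2 Hp inE.
  + exact: L2'.
- exists p, [:: Some x], (map Some u ++ None :: map Some v ++ None :: map Some t).
  split => //; last exact: IH.
  by rewrite /trans2 Hp inE.
Qed.

Lemma L0 i z p : nat_of_ord p = 0 -> run trans2 p i z qf ->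
  exists x u v t, [/\ 0 < size v, 0 < size t, i = map inl (x :: u ++ v) ++ map inr t &
    z = Some x :: map Some u ++ None :: map Some v ++ None :: map Some t].
Proof.
case: i => [|a i] /= Hp.
  by case=> _ E; move: Hp; rewrite E Hqf.
case=> [[[|[|[|[|m]]]] Hm]] [out [w' [Ho -> H]]];
  rewrite /trans2 Hp /= in Ho; case: a Ho => x //; rewrite inE => /eqP ->.
have [u [v [t [Hv Ht -> ->]]]] := L1 (erefl : nat_of_ord (Ordinal Hm) = 1) H; by exists x, u, v, t.
Qed.

Definition s1 : 'I_4 := @Ordinal 4 1 isT.

Lemma L0' x u v t p : nat_of_ord p = 0 -> 0 < size v -> 0 < size t ->
  run trans2 p (map inl (x :: u ++ v) ++ map inr t)
    (Some x :: map Some u ++ None :: map Some v ++ None :: map Some t) qf.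
Proof.
move=> Hp Hv Ht /=.
exists s1, [:: Some x], (map Some u ++ None :: map Some v ++ None :: map Some t).
split => //; last exact: L1'.
by rewrite /trans2 Hp inE.
Qed.
End Stage2.

Section Stage2b.
Variables (S : Type) (mul : S -> S -> S) (mulA : associative mul).
Variables (X : finType) (f : X -> S).

Definition s0 : 'I_4 := @Ordinal 4 0 isT.
Definition s3 : 'I_4 := @Ordinal 4 3 isT.

Lemma loop_mt u v w : loop_problem mul f (map inl (u ++ v) ++ map inr (rev w)) <->
  eval1 mul f (u ++ v) = eval1 mul f w.
Proof.
rewrite /loop_problem walk_cat /eval1; split.
- by case=> c [/walk_inl -> /walk_inr ->].
- move=> E; eexists; split; first exact/walk_inl.
  by apply/walk_inr; rewrite -E.
Qed.

Lemma stage2 : context_free (loop_problem mul f) ->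
  context_free (mult_table mul f (@nonempty_words X)).
Proof.
move=> HX; apply: cf_ext (cf_trans (@trans2 X) s0 (pred1 s3) HX) _ => t; split.
- case=> i [q [Li /eqP Eq R]]; subst q.
  have [x [u [v [t' [Hv Ht Ei Et]]]]] := L0 (erefl : nat_of_ord s3 = 3) (erefl : nat_of_ord s0 = 0) R.
  subst; exists (x :: u), v, (rev t'); split => //.
  + by rewrite /nonempty_words size_rev.
  + by rewrite size_rev Hv Ht.
  + by apply/loop_mt; rewrite revK.
  + by rewrite revK.
- case=> u [v [w [[Hu [Hv Hw]] /andP [/andP [Su Sv] Sw] E ->]]].
  case: u Hu Su E => [|x u] // _ _ E.
  exists (map inl (x :: u ++ v) ++ map inr (rev w)), s3; split => //.
  + have HH := proj2 (loop_mt (x :: u) v w) E. exact HH.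
  + apply: L0' => //; by rewrite size_rev.
Qed.
End Stage2b.


Theorem proposition6p4 (S : Type) (mul : S -> S -> S)
    (mulA : associative mul)
    (hloop : exists (Y : finType) (g : Y -> S),
        generates mul g /\ context_free (loop_problem mul g))
    (X : finType) (f : X -> S) (hf : generates mul f) :
  context_free (mult_table mul f (@nonempty_words X)) /\ DG_hyperbolic mul.
Proof.
have [Y [g [hg hY]]] := hloop.
pose c := fun x => proj1_sig (constructive_indefinite_description _ (hg (f x))).
have Hc : forall x, eval1 mul g (c x) = Some (f x).
  by move=> x; rewrite /c; case: (constructive_indefinite_description _ _).
have HX : context_free (loop_problem mul f) := stage1 mulA Hc hY.
have HM := stage2 HX.
split => //.
exists X, f, (@nonempty_words X); split => //.
- move=> s; have [w Hw] := hf s; exists w; split => //.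
  by case: w Hw.
- exists bool, false, (fun _ _ => true), id => w.
  rewrite /nonempty_words; case: w => [|x w] //=.
  by elim: w => [|y w IH] //=.
Qed.
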